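(* Let $R$ be a ring and $\Psi:R\to R$ a ring endomorphism. Then $R$ is NJ-symmetric if and only if the skew formal power series ring $R[[x,\Psi]]$ is NJ-symmetric.
   Context: Rings are associative with identity. $R[[x,\Psi]]$ consists of formal power series $\sum_{i\ge 0} r_i x^i$ with $r_i\in R$, with multiplication determined by $xr=\Psi(r)x$ for $r\in R$. $N(S)$ is the set of nilpotent elements, $J(S)$ the Jacobson radical of a ring $S$. $S$ is NJ-symmetric if for all $a,b,c\in S$, $abc\in N(S)$ implies $bac\in J(S)$. *)

(* Defs.v *)
From HB Require Import structures.
From mathcomp Require Import all_boot all_order all_algebra.
Set Implicit Arguments. Unset Strict Implicit. Unset Printing Implicit Defensive.
Import GRing.Theory.
Local Open Scope ring_scope.

(* Ring-theoretic notions stated for an arbitrary carrier T equipped with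
   ring operations (0, 1, +, -, * ), so that they apply uniformly to R and to
   the skew power series ring R[[x,Psi]] built below. *)
Section RingNotions.
Variables (T : Type) (zero one : T) (add : T -> T -> T) (opp : T -> T)
          (mul : T -> T -> T).

Definition rpow (a : T) (n : nat) : T := iter n (mul a) one.

Definition is_nilpotent (a : T) : Prop := exists n : nat, rpow a n = zero.

Definition in_jacobson (a : T) : Prop :=
  forall r : T, exists u : T,
    mul u (add one (opp (mul r a))) = one /\ mul (add one (opp (mul r a))) u = one.

Definition NJ_symmetric_ops : Prop :=
  forall a b c : T, is_nilpotent (mul (mul a b) c) -> in_jacobson (mul (mul b a) c).
End RingNotions.

Definition NJ_symmetric (R : pzRingType) : Prop :=
  @NJ_symmetric_ops R 0 1 +%R (@GRing.opp R) *%R.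

(* Skew formal power series ring R[[x, Psi]]: a series sum_i r_i x^i is its
   coefficient sequence i |-> r_i; multiplication is determined by
   x r = Psi(r) x, i.e. (f g)_n = sum_{i+j=n} f_i Psi^i(g_j). *)
Section SkewPS.
Variables (R : pzRingType) (Psi : {rmorphism R -> R}).

Definition skewps := nat -> R.
Definition sps_zero : skewps := fun _ => 0.
Definition sps_one : skewps := fun n => if n == 0%N then 1 else 0.
Definition sps_add (f g : skewps) : skewps := fun n => f n + g n.
Definition sps_opp (f : skewps) : skewps := fun n => - f n.
Definition sps_mul (f g : skewps) : skewps :=
  fun n => \sum_(i < n.+1) f i * iter i Psi (g (n - i)%N).

Definition skewps_NJ_symmetric : Prop :=
  @NJ_symmetric_ops skewps sps_zero sps_one sps_add sps_opp sps_mul.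
End SkewPS.

(* Main.v *)
Require Import Defs.
From mathcomp Require Import all_boot all_order all_algebra.
From Stdlib Require Import FunctionalExtensionality.
From mathcomp Require Import zify.
Set Implicit Arguments. Unset Strict Implicit. Unset Printing Implicit Defensive.
Import GRing.Theory.
Local Open Scope ring_scope.

Section Aux.
Variables (R : pzRingType) (Psi : {rmorphism R -> R}).
Local Notation P i := (iter i Psi).
Local Notation mul := (sps_mul Psi).

Lemma itM i x y : P i (x * y) = P i x * P i y.
Proof. by elim: i => //= i ->; rewrite rmorphM. Qed.
Lemma itD i x y : P i (x + y) = P i x + P i y.
Proof. by elim: i => //= i ->; rewrite rmorphD. Qed.
Lemma itN i x : P i (- x) = - P i x.
Proof. by elim: i => //= i ->; rewrite rmorphN. Qed.
Lemma it0 i : P i 0 = 0.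
Proof. by elim: i => //= i ->; rewrite rmorph0. Qed.
Lemma it1 i : P i 1 = 1.
Proof. by elim: i => //= i ->; rewrite rmorph1. Qed.
Lemma it_sum i m (F : 'I_m -> R) : P i (\sum_(j < m) F j) = \sum_(j < m) P i (F j).
Proof.
elim: m F => [|m IH] F; first by rewrite !big_ord0 it0.
by rewrite !big_ord_recr /= itD IH.
Qed.

Lemma sum_if_eq m (x : nat) (F : nat -> R) (b : nat -> bool) :
  \sum_(i < m) (if (i == x :> nat) && b i then F i else 0) =
  if (x < m)%N && b x then F x else 0.
Proof.
case: (ltnP x m) => hx /=.
  rewrite (bigD1 (Ordinal hx)) //= eqxx /= big1 ?addr0 // => i hi.
  suff -> : (i == x :> nat) = false by [].
  by apply/negP => /eqP e; move/eqP: hi; apply; apply: val_inj.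
rewrite big1 // => i _.
by rewrite (_ : (i == x :> nat) = false) //; apply/negP => /eqP e; move: (ltn_ord i); rewrite e ltnNge hx.
Qed.

Lemma mulE_w f g n m : (n < m)%N ->
  mul f g n = \sum_(i < m) \sum_(j < m) (if (i + j == n)%N then f i * P i (g j) else 0).
Proof.
move=> hnm; rewrite /sps_mul.
have -> : \sum_(i < m) \sum_(j < m) (if (i + j == n)%N then f i * P i (g j) else 0)
  = \sum_(i < m) (if (i < n.+1)%N then f i * P i (g (n - i)%N) else 0).
  apply: eq_bigr => i _.
  rewrite (eq_bigr (fun j : 'I_m => if (j == (n - i)%N :> nat) && (i < n.+1)%N then f i * P i (g j) else 0)).
    rewrite (sum_if_eq m (n - i) (fun j => f i * P i (g j)) (fun _ => (i < n.+1)%N)) /=; case: ltnP => hi; rewrite ?andbT ?andbF //.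
    by move: hi; rewrite leqNgt (leq_ltn_trans (leq_subr i n) hnm).
  move=> j _; congr (if _ then _ else _).
  apply/idP/idP.
    by move/eqP => <-; rewrite addKn eqxx /= ltnS leq_addr.
  by case/andP => /eqP -> hi; rewrite subnKC // -ltnS.
by rewrite (big_ord_widen m (fun i => f i * P i (g (n - i)%N)) hnm) big_mkcond.
Qed.


Lemma mulA f g h : mul (mul f g) h = mul f (mul g h).
Proof.
apply: functional_extensionality => n.
set N := n.+1.
have hN : (n < N)%N by [].
pose T := \sum_(j < N) \sum_(k < N) \sum_(l < N)
   (if (j + k + l == n)%N then f j * P j (g k) * P (j + k)%N (h l) else 0).
transitivity T.
  rewrite (mulE_w _ _ hN).
  transitivity (\sum_(i < N) \sum_(l < N) \sum_(j < N) \sum_(k < N)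
     (if (i == (j + k)%N :> nat) && (i + l == n)%N then f j * P j (g k) * P i (h l) else 0)).
    apply: eq_bigr => i _; apply: eq_bigr => l _.
    rewrite (mulE_w _ _ (ltn_ord i)).
    case: (boolP ((i + l)%N == n)) => hil; last first.
      by rewrite big1 // => j _; rewrite big1 // => k _; rewrite andbF.
    rewrite mulr_suml; apply: eq_bigr => j _; rewrite mulr_suml; apply: eq_bigr => k _.
    rewrite andbT eq_sym; case: (_ == _); by rewrite ?mul0r.
  rewrite exchange_big /=.
  under eq_bigr => l _ do rewrite exchange_big /=.
  under eq_bigr => l _ do under eq_bigr => j _ do rewrite exchange_big /=.
  rewrite exchange_big /=.
  under eq_bigr => j _ do rewrite exchange_big /=.
  apply: eq_bigr => j _; apply: eq_bigr => k _; apply: eq_bigr => l _.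
  rewrite (sum_if_eq N (j + k) (fun i => f j * P j (g k) * P i (h l)) (fun i => (i + l == n)%N)) /=.
  case: (boolP ((j + k + l)%N == n)) => e.
    by rewrite (leq_ltn_trans _ hN) //; move/eqP: e => <-; rewrite leq_addr.
  by rewrite andbF.
symmetry; rewrite (mulE_w _ _ hN).
transitivity (\sum_(j < N) \sum_(i < N) \sum_(k < N) \sum_(l < N)
     (if (i == (k + l)%N :> nat) && (j + i == n)%N then f j * P j (g k) * P (j + k)%N (h l) else 0)).
  apply: eq_bigr => j _; apply: eq_bigr => i _.
  rewrite (mulE_w _ _ (ltn_ord i)) it_sum.
  case: (boolP ((j + i)%N == n)) => hji; last first.
    by rewrite big1 // => k _; rewrite big1 // => l _; rewrite andbF.
  rewrite mulr_sumr; apply: eq_bigr => k _; rewrite it_sum mulr_sumr; apply: eq_bigr => l _.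
  rewrite andbT eq_sym; case: (_ == _); last by rewrite it0 mulr0.
  by rewrite itM iterD mulrA.
apply: eq_bigr => j _.
rewrite exchange_big /=.
apply: eq_bigr => k _.
rewrite exchange_big /=.
apply: eq_bigr => l _.
rewrite (sum_if_eq N (k + l) (fun i => f j * P j (g k) * P (j + k)%N (h l)) (fun i => (j + i == n)%N)) /=.
rewrite addnA.
case: (boolP ((j + k + l)%N == n)) => e.
  rewrite andbT; have -> : (k + l < N)%N by move/eqP: e; rewrite /N; lia.
  by [].
by rewrite andbF.
Qed.

Lemma mul1s f : mul (sps_one R) f = f.
Proof.
apply: functional_extensionality => n; rewrite /sps_mul big_ord_recl /= mul1r subn0.
by rewrite big1 ?addr0 // => i _; rewrite mul0r.
Qed.

Lemma muls1 f : mul f (sps_one R) = f.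
Proof.
apply: functional_extensionality => n; rewrite /sps_mul big_ord_recr /= subnn /= it1 mulr1.
rewrite big1 ?add0r // => i _; rewrite /sps_one.
have -> : (n - i == 0)%N = false by apply/negbTE; rewrite subn_eq0 -ltnNge.
by rewrite it0 mulr0.
Qed.

Lemma mul0E f g : mul f g 0%N = f 0%N * g 0%N.
Proof. by rewrite /sps_mul big_ord_recl big_ord0 addr0. Qed.

Section Srec.
Variable step : nat -> (nat -> R) -> R.
Fixpoint coefs n : seq R :=
  match n with
  | 0 => [:: step 0 (fun _ => 0)]
  | k.+1 => rcons (coefs k) (step k.+1 (fun m => nth 0 (coefs k) m))
  end.
Definition srec n := nth 0 (coefs n) n.

Lemma size_coefs n : size (coefs n) = n.+1.
Proof. by elim: n => //= n IH; rewrite size_rcons IH. Qed.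

Lemma coefs_prefix k n m : (m <= n)%N -> (n <= k)%N -> nth 0 (coefs k) m = nth 0 (coefs n) m.
Proof.
elim: k => [|k IH] hmn hnk.
  by move: hnk; rewrite leqn0 => /eqP ->.
case: (ltngtP n k.+1) => [h||->] //; last by move=> h; move: hnk; rewrite leqNgt h.
rewrite /= nth_rcons size_coefs (leq_ltn_trans hmn h) IH //.
Qed.

Hypothesis hstep : forall n f f', (forall m, (m < n)%N -> f m = f' m) -> step n f = step n f'.

Lemma srecE n : srec n = step n srec.
Proof.
case: n => [|k]; first by apply: hstep.
rewrite /srec /= nth_rcons size_coefs ltnn eqxx; apply: hstep => m hm.
by rewrite /srec (coefs_prefix (m:=m) (n:=m)) // -ltnS.
Qed.
End Srec.

Lemma sps_inv g u0 : u0 * g 0%N = 1 -> g 0%N * u0 = 1 ->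
  exists u, mul u g = sps_one R /\ mul g u = sps_one R.
Proof.
move=> h1 h2.
pose stepR n (f : nat -> R) := u0 * ((if n == 0%N then 1 else 0) - \sum_(i < n) g i.+1 * P i.+1 (f (n - i.+1)%N)).
pose stepL n (f : nat -> R) := ((if n == 0%N then 1 else 0) - \sum_(i < n) f i * P i (g (n - i)%N)) * P n u0.
have hR : forall n f f', (forall m, (m < n)%N -> f m = f' m) -> stepR n f = stepR n f'.
  move=> n f f' e; rewrite /stepR; congr (_ * (_ - _)); apply: eq_bigr => i _.
  rewrite e //; have := ltn_ord i; lia.
have hL : forall n f f', (forall m, (m < n)%N -> f m = f' m) -> stepL n f = stepL n f'.
  by move=> n f f' e; rewrite /stepL; congr ((_ - _) * _); apply: eq_bigr => i _; rewrite e.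
set r := srec stepR; set l := srec stepL.
have gr : mul g r = sps_one R.
  apply: functional_extensionality => n; rewrite /sps_mul big_ord_recl /= subn0.
  rewrite /r (srecE hR) -/r /stepR mulrA h2 mul1r.
  by rewrite [X in _ - X + _](eq_bigr (fun i : 'I_n => g (bump 0 i) * P (bump 0 i) (r (n - bump 0 i)%N))) ?subrK.
have lg : mul l g = sps_one R.
  apply: functional_extensionality => n; rewrite /sps_mul big_ord_recr /= subnn.
  rewrite /l (srecE hL) -/l /stepL -mulrA -itM h1 it1 mulr1.
  by rewrite addrC subrK.
have el : l = r by rewrite -(muls1 l) -gr -mulA lg mul1s.
exists r; split; last exact: gr.
by rewrite -el.
Qed.

Lemma rpow_coef0 f n :
  rpow (sps_one R) mul f n 0%N = rpow 1 *%R (f 0%N) n.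
Proof. by elim: n => //= n IH; rewrite mul0E IH. Qed.

Definition Cst (x : R) : skewps R := fun n => if n == 0%N then x else 0.

Lemma mulC x y : mul (Cst x) (Cst y) = Cst (x * y).
Proof.
apply: functional_extensionality => n; rewrite /sps_mul big_ord_recl /= subn0.
rewrite big1 ?addr0; first by rewrite /Cst; case: n => [|n] /=; rewrite ?mulr0.
by move=> i _; rewrite /Cst /= mul0r.
Qed.

Lemma rpowC x n : rpow (sps_one R) mul (Cst x) n = Cst (rpow 1 *%R x n).
Proof. by elim: n => //= n ->; rewrite mulC. Qed.

End Aux.

Theorem corollary2p27 (R : pzRingType) (Psi : {rmorphism R -> R}) :
  NJ_symmetric R <-> skewps_NJ_symmetric Psi.
Proof.
split.
- move=> HR. rewrite /skewps_NJ_symmetric /NJ_symmetric_ops. move=> a b c. rewrite /is_nilpotent. case=> n hn h.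
  have nil0 : is_nilpotent 0 1 *%R (a 0%N * b 0%N * c 0%N).
    exists n; have e := congr1 (fun F => F 0%N) hn.
    by rewrite /= rpow_coef0 !(mul0E Psi) in e.
  have [u0 [h1 h2]] := HR _ _ _ nil0 (h 0%N).
  apply: (@sps_inv _ Psi _ u0).
    by rewrite /sps_add /sps_opp /sps_one /= !(mul0E Psi).
  by rewrite /sps_add /sps_opp /sps_one /= !(mul0E Psi).
- move=> HS. rewrite /NJ_symmetric /NJ_symmetric_ops. move=> a b c. rewrite /is_nilpotent. case=> n hn r.
  have nilS : is_nilpotent (sps_zero R) (sps_one R) (sps_mul Psi)
      (sps_mul Psi (sps_mul Psi (Cst a) (Cst b)) (Cst c)).
    exists n; rewrite !mulC rpowC hn; apply: functional_extensionality => m.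
    by rewrite /Cst /sps_zero; case: (_ == _).
  have [u [h1 h2]] := HS _ _ _ nilS (Cst r).
  exists (u 0%N); rewrite !mulC in h1 h2.
  have e1 := congr1 (fun F => F 0%N) h1; have e2 := congr1 (fun F => F 0%N) h2.
  rewrite /= !(mul0E Psi) /sps_add /sps_opp /sps_one /Cst /= in e1 e2.
  by split.
Qed.
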